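(* Let $M$ be an exact $\mathfrak{K}$-module. The following are equivalent: (1) $M_0\cong\operatorname{im}\alpha_{01}\oplus\operatorname{im}\alpha_{02}$ (i.e. $M_0$ is the internal direct sum of these two subgroups); (2) $\ker\alpha_{01}=\ker N(s_1)$ and $\operatorname{im}\alpha_{10}=\operatorname{im}N(s_1)$; (3) $\ker\alpha_{02}=\ker(1-t_2)$ and $\operatorname{im}\alpha_{20}=\operatorname{im}(1-t_2)$. These equivalent conditions hold if the $\mathfrak{S}$-module $(M_1,s_1)$ is cohomologically trivial or if the $\mathfrak{S}_2$-module $(M_2,s_2,t_2)$ is cohomologically trivial.
   Context: Fix a prime $p$, $N(x)=1+x+\dots+x^{p-1}$, $\mathfrak{S}=\mathbb{Z}[t]/(t^p-1)$, $\mathfrak{S}_2=\mathbb{Z}[s,t]/((1-s)(1-t),N(s)+N(t)-p)$. A $\mathfrak{K}$-module $M$ amounts to $\mathbb{Z}/2$-graded abelian groups $M_0,M_1,M_2$ with homomorphisms $\alpha_{jk}\colon M_k\to M_j$ ($j\neq k$; $\alpha_{12},\alpha_{21}$ grading-reversing, others grading-preserving) with $\alpha_{jk}\alpha_{km}=0$ for $\{j,k,m\}=\{0,1,2\}$ and, for $t_0:=1-\alpha_{02}\alpha_{20}$ on $M_0$, $s_1:=1-\alpha_{12}\alpha_{21}$ on $M_1$, $t_2:=1-\alpha_{20}\alpha_{02}$, $s_2:=1-\alpha_{21}\alpha_{12}$ on $M_2$: $\alpha_{01}\alpha_{10}=N(t_0)$, $\alpha_{10}\alpha_{01}=N(s_1)$,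 $N(t_2)+N(s_2)=p$ (so $(M_2,s_2,t_2)$ is an $\mathfrak{S}_2$-module). $M$ is exact if the cyclic sequences $M_0\xrightarrow{\alpha_{10}}M_1\xrightarrow{\alpha_{21}}M_2\xrightarrow{\alpha_{02}}M_0$ and $M_0\xrightarrow{\alpha_{20}}M_2\xrightarrow{\alpha_{12}}M_1\xrightarrow{\alpha_{01}}M_0$ are exact. An $\mathfrak{S}$-module $(L,t)$ is cohomologically trivial if $\ker(1-t)=\operatorname{im}N(t)$ and $\operatorname{im}(1-t)=\ker N(t)$; an $\mathfrak{S}_2$-module $(L,s,t)$ is cohomologically trivial if $\operatorname{im}(1-t)=\ker(1-s)$ and $\operatorname{im}(1-s)=\ker(1-t)$. *)

(* Defs.v *)
From HB Require Import structures.
From mathcomp Require Import all_boot all_order all_algebra.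
Set Implicit Arguments. Unset Strict Implicit. Unset Printing Implicit Defensive.
Import GRing.Theory.
Local Open Scope ring_scope.

Definition Nop (p : nat) (M : zmodType) (f : M -> M) (x : M) : M :=
  \sum_(i < p) iter i f x.

Definition one_minus (M : zmodType) (f : M -> M) (x : M) : M := x - f x.

Definition kerP (U V : zmodType) (f : U -> V) : U -> Prop := fun x => f x = 0.
Definition imP (U V : zmodType) (f : U -> V) : V -> Prop :=
  fun y => exists x, f x = y.

Definition same_set (T : Type) (A B : T -> Prop) : Prop := forall x, A x <-> B x.

Definition internal_dsum (M : zmodType) (A B : M -> Prop) : Prop :=
  (forall x, exists y z, A y /\ B z /\ x = y + z) /\
  (forall x, A x -> B x -> x = 0).

Definition exact_at (U V W : zmodType) (f : U -> V) (g : V -> W) : Prop :=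
  same_set (kerP g) (imP f).

(* A Z/2-grading of an abelian group M is encoded by the additive idempotent
   projection e onto the even part M^0 (with kernel the odd part M^1). *)
Definition grading (M : zmodType) (e : M -> M) : Prop := forall x, e (e x) = e x.
Definition grading_preserving (U V : zmodType) (eU : U -> U) (eV : V -> V)
  (f : U -> V) : Prop := forall x, f (eU x) = eV (f x).
Definition grading_reversing (U V : zmodType) (eU : U -> U) (eV : V -> V)
  (f : U -> V) : Prop := forall x, f (eU x) = f x - eV (f x).

Record KModule (p : nat) := {
  KM0 : zmodType; KM1 : zmodType; KM2 : zmodType;
  gr0 : {additive KM0 -> KM0}; gr1 : {additive KM1 -> KM1};
  gr2 : {additive KM2 -> KM2};
  gr0_idem : grading gr0; gr1_idem : grading gr1; gr2_idem : grading gr2;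
  a01 : {additive KM1 -> KM0}; a10 : {additive KM0 -> KM1};
  a02 : {additive KM2 -> KM0}; a20 : {additive KM0 -> KM2};
  a12 : {additive KM2 -> KM1}; a21 : {additive KM1 -> KM2};
  a01_gr : grading_preserving gr1 gr0 a01;
  a10_gr : grading_preserving gr0 gr1 a10;
  a02_gr : grading_preserving gr2 gr0 a02;
  a20_gr : grading_preserving gr0 gr2 a20;
  a12_gr : grading_reversing gr2 gr1 a12;
  a21_gr : grading_reversing gr1 gr2 a21;
  a01a12 : forall x, a01 (a12 x) = 0;
  a02a21 : forall x, a02 (a21 x) = 0;
  a10a02 : forall x, a10 (a02 x) = 0;
  a12a20 : forall x, a12 (a20 x) = 0;
  a20a01 : forall x, a20 (a01 x) = 0;
  a21a10 : forall x, a21 (a10 x) = 0;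
  a01a10 : forall x, a01 (a10 x) = Nop p (fun y => y - a02 (a20 y)) x;
  a10a01 : forall x, a10 (a01 x) = Nop p (fun y => y - a12 (a21 y)) x;
  N2rel : forall x, Nop p (fun y => y - a20 (a02 y)) x
                    + Nop p (fun y => y - a21 (a12 y)) x = x *+ p
}.

Section Ops.
Variables (p : nat) (M : KModule p).
Definition t0 : KM0 M -> KM0 M := fun y => y - a02 M (a20 M y).
Definition s1 : KM1 M -> KM1 M := fun y => y - a12 M (a21 M y).
Definition t2 : KM2 M -> KM2 M := fun y => y - a20 M (a02 M y).
Definition s2 : KM2 M -> KM2 M := fun y => y - a21 M (a12 M y).

Definition Kexact : Prop :=
  (exact_at (a10 M) (a21 M) /\ exact_at (a21 M) (a02 M) /\
   exact_at (a02 M) (a10 M)) /\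
  (exact_at (a20 M) (a12 M) /\ exact_at (a12 M) (a01 M) /\
   exact_at (a01 M) (a20 M)).
End Ops.
Arguments t0 {p} M _.
Arguments s1 {p} M _.
Arguments t2 {p} M _.
Arguments s2 {p} M _.
Arguments Kexact {p} M.

Definition coh_trivial_S (p : nat) (L : zmodType) (t : L -> L) : Prop :=
  same_set (kerP (one_minus t)) (imP (Nop p t)) /\
  same_set (imP (one_minus t)) (kerP (Nop p t)).

Definition coh_trivial_S2 (L : zmodType) (s t : L -> L) : Prop :=
  same_set (imP (one_minus t)) (kerP (one_minus s)) /\
  same_set (imP (one_minus s)) (kerP (one_minus t)).

(* Main.v *)
Require Import Defs.
From mathcomp Require Import all_boot all_order all_algebra.
From Stdlib Require Import FunctionalExtensionality.
Import GRing.Theory.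
Local Open Scope ring_scope.

Lemma omE (V : zmodType) (x y : V) : x - (x - y) = y.
Proof. by rewrite opprB addrC subrK. Qed.

Section Gen.
Variables (A B C : zmodType) (f : {additive A -> B}) (g : {additive B -> C}).

Lemma kerpart (K : B -> Prop) (hK : forall b, g b = 0 <-> K b) :
  same_set (kerP f) (kerP (fun x => g (f x))) <->
  (forall y, imP f y -> K y -> y = 0).
Proof.
split.
- move=> h y [a <-] Ky. apply/(proj2 (h a)). by apply/hK.
- move=> h a; split; rewrite /kerP.
  + by move=> ->; rewrite raddf0.
  + move=> ga; apply: h; [by exists a | by apply/hK].
Qed.

Lemma impart (K : B -> Prop) (hK : forall b, g b = 0 <-> K b) :
  same_set (imP g) (imP (fun x => g (f x))) <->
  (forall b, exists y z, imP f y /\ K z /\ b = y + z).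
Proof.
split.
- move=> h b. have [a ha] := proj1 (h (g b)) (ex_intro _ b erefl).
  exists (f a), (b - f a); split; first by exists a.
  split; last by rewrite addrC subrK.
  by apply/hK; rewrite raddfB ha subrr.
- move=> h c; split.
  + move=> [b <-]. have [y [z [[a <-] [Kz ->]]]] := h b.
    exists a. by rewrite raddfD (proj2 (hK z) Kz) addr0.
  + by move=> [a <-]; exists (f a).
Qed.
End Gen.

Theorem lemma7p9 (p : nat) (hp : prime p) (M : KModule p) (hex : Kexact M) :
  let cond1 := internal_dsum (imP (a01 M)) (imP (a02 M)) in
  let cond2 := same_set (kerP (a01 M)) (kerP (Nop p (s1 M))) /\
               same_set (imP (a10 M)) (imP (Nop p (s1 M))) in
  let cond3 := same_set (kerP (a02 M)) (kerP (one_minus (t2 M))) /\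
               same_set (imP (a20 M)) (imP (one_minus (t2 M))) in
  [/\ cond1 <-> cond2, cond2 <-> cond3 &
      (coh_trivial_S p (s1 M) \/ coh_trivial_S2 (s2 M) (t2 M) -> cond1)].
Proof.
move=> c1 c2 c3.
have [[e1 [e2 e3]] [e4 [e5 e6]]] := hex.
have N1 : Nop p (s1 M) = fun x => a10 M (a01 M x).
  by apply: functional_extensionality => x; rewrite a10a01.
have T2 : one_minus (t2 M) = fun x => a20 M (a02 M x).
  by apply: functional_extensionality => x; rewrite /one_minus /t2 omE.
have S1 : one_minus (s1 M) = fun x => a12 M (a21 M x).
  by apply: functional_extensionality => x; rewrite /one_minus /s1 omE.
have S2 : one_minus (s2 M) = fun x => a21 M (a12 M x).
  by apply: functional_extensionality => x; rewrite /one_minus /s2 omE.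
have h12 : c1 <-> c2.
  have K := @kerpart _ _ _ (a01 M) (a10 M) _ e3.
  have I := @impart _ _ _ (a01 M) (a10 M) _ e3.
  rewrite /c2 N1 /c1 /internal_dsum.
  split => -[h h']; split.
  - exact: (proj2 K).
  - exact: (proj2 I).
  - exact: (proj1 I).
  - exact: (proj1 K).
have h13 : c1 <-> c3.
  have K := @kerpart _ _ _ (a02 M) (a20 M) _ e6.
  have I := @impart _ _ _ (a02 M) (a20 M) _ e6.
  rewrite /c3 T2 /c1 /internal_dsum.
  split => -[h h']; split.
  - apply: (proj2 K) => y Hy Hz; exact: h'.
  - apply: (proj2 I) => b; have [y [z [Hy [Hz ->]]]] := h b; exists z, y; by rewrite addrC.
  - move=> b; have [y [z [Hy [Hz ->]]]] := proj1 I h' b; exists z, y; by rewrite addrC.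
  - move=> y Hy Hz; exact: (proj1 K h).
split.
- exact: h12.
- split => h; [apply/h13/h12 | apply/h12/h13] => //.
- case=> [[k1 k2]|[k1 k2]].
  + apply/h12; rewrite /c2 N1; split => x; split.
    * by rewrite /kerP => ->; rewrite raddf0.
    * move=> hx. have : kerP (Nop p (s1 M)) x by rewrite N1.
      move/(proj2 (k2 x)) => [y]; rewrite S1 => <-.
      by apply/(proj2 (e5 _)); exists (a21 M y).
    * move=> [y <-]. have : kerP (one_minus (s1 M)) (a10 M y).
        by rewrite S1 /kerP a21a10 raddf0.
      by move/(proj1 (k1 _)) => [z]; rewrite N1 => <-; exists z.
    * by move=> [y <-]; exists (a01 M y).
  + apply/h13; rewrite /c3 T2; split => x; split.
    * by rewrite /kerP => ->; rewrite raddf0.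
    * move=> hx. have : kerP (one_minus (t2 M)) x by rewrite T2.
      move/(proj2 (k2 x)) => [y]; rewrite S2 => <-.
      by apply/(proj2 (e2 _)); exists (a12 M y).
    * move=> [y <-]. have : kerP (one_minus (s2 M)) (a20 M y).
        by rewrite S2 /kerP a12a20 raddf0.
      by move/(proj2 (k1 _)) => [z]; rewrite T2 => <-; exists z.
    * by move=> [y <-]; exists (a02 M y).
Qed.
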